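(* Let $A\in\mathbb{R}^{m\times n}$ with $m<n$ have unit $\ell_2$-norm columns and mutual coherence $\mu=\mu(A)$. Let $x\in\mathbb{R}^n$ and $y\in\mathbb{R}^m$ satisfy $\|y-Ax\|_2\le\epsilon$. Let $k$ be a positive integer, let $x_k$ be the best $k$-term approximation of $x$, and let $T_0$ be its support. Let $T\subset[n]=\{1,\dots,n\}$ be an arbitrary set, and define $\rho\ge 0$ and $\alpha\in[0,1]$ by $|T|=\rho k$ and $|T\cap T_0|=\alpha\rho k$. Fix a weight $w\in[0,1]$ and let $x^*$ be a minimizer of $$\min_{z\in\mathbb{R}^n}\|z\|_{1,w}\quad\text{subject to}\quad \|y-Az\|_2\le\epsilon,$$ where $\|z\|_{1,w}=\sum_{i=1}^n w_i|z_i|$ with $w_i=w$ for $i\in T$ and $w_i=1$ for $i\notin T$. Suppose that $$k<\begin{cases}\left(\dfrac{1}{2\sqrt{\rho}\,(2w\sqrt{\alpha}+1)}\left(w+\sqrt{w^2+4(2w\sqrt{\alpha}+1)\left(1+\tfrac{1}{\mu}\right)}\right)\right)^2, & \text{if } w\in(0,1],\\[2ex] \dfrac{1}{\rho}\left(1+\dfrac{1}{\mu}\right), & \text{if } w=0.\end{cases}$$ Then $$\|x^*_T-x_T\|_2\le C_0\,\epsilon+C_1\Big(w\|x-x_k\|_1+(1-w)\|x_{T^c\cap T_0^c}\|_1+\|x_{T^c\cap T_0}\|_1\Big),$$ where $$C_0=\frac{2\sqrt{1+(\rho k-1)\mu}}{1+\mu+w\mu\sqrt{\rho k}-\mu\rho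 k(2w\sqrt{\alpha}+1)},\qquad C_1=\frac{2\mu\sqrt{\rho k}}{1+\mu+w\mu\sqrt{\rho k}-\mu\rho k(2w\sqrt{\alpha}+1)}.$$
   Context: The mutual coherence of a matrix $A$ with columns $a_1,\dots,a_n$ is $\mu(A)=\max_{i\neq j}\frac{|a_i^Ta_j|}{\|a_i\|_2\|a_j\|_2}$. The best $k$-term approximation $x_k$ of $x$ keeps (at most) $k$ largest-magnitude coordinates of $x$ and sets the rest to zero. For a vector $v\in\mathbb{R}^n$ and a set $S\subseteq[n]$, $v_S$ denotes the restriction of $v$ to the coordinates in $S$ (equivalently, the vector agreeing with $v$ on $S$ and zero elsewhere); $S^c=[n]\setminus S$. *)

(* Defs.v *)
From HB Require Import structures.
From mathcomp Require Import all_boot all_order all_algebra.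
From mathcomp Require Import reals.
Set Implicit Arguments. Unset Strict Implicit. Unset Printing Implicit Defensive.
Import Order.TTheory GRing.Theory Num.Theory.
Local Open Scope ring_scope.

Section Defs.
Variable R : realType.

Definition norm2 (n : nat) (v : 'cV[R]_n) : R := Num.sqrt (\sum_i (v i 0) ^+ 2).

Definition norm1 (n : nat) (v : 'cV[R]_n) : R := \sum_i `|v i 0|.

Definition norm1w (n : nat) (T : {set 'I_n}) (w : R) (v : 'cV[R]_n) : R :=
  \sum_i (if i \in T then w else 1) * `|v i 0|.

Definition restrict (n : nat) (S : {set 'I_n}) (v : 'cV[R]_n) : 'cV[R]_n :=
  \col_i (if i \in S then v i 0 else 0).

Definition supp (n : nat) (v : 'cV[R]_n) : {set 'I_n} := [set i | v i 0 != 0].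

Definition coherence (m n : nat) (A : 'M[R]_(m, n)) : R :=
  \big[Num.max/0]_(i < n) \big[Num.max/0]_(j < n | i != j)
    (`|((col i A)^T *m col j A) 0 0| / (norm2 (col i A) * norm2 (col j A))).

Definition best_kterm (n k : nat) (x xk : 'cV[R]_n) : Prop :=
  exists S : {set 'I_n},
    [/\ #|S| = minn k n,
        (forall i j, i \in S -> j \notin S -> `|x j 0| <= `|x i 0|) &
        xk = restrict S x].

End Defs.

(* Main.v *)
Require Import Defs.
From HB Require Import structures.
From mathcomp Require Import all_boot all_order all_algebra.
From mathcomp Require Import reals.
From mathcomp Require Import ring lra.
Import Order.TTheory GRing.Theory Num.Theory.
Local Open Scope ring_scope.

Section Aux.
Variable R : realType.

Lemma CS (I : finType) (u v : I -> R) :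
  (\sum_i u i * v i) ^+ 2 <= (\sum_i u i ^+ 2) * (\sum_i v i ^+ 2).
Proof.
have H : 0 <= \sum_i \sum_j (u i * v j - u j * v i) ^+ 2.
  by apply: sumr_ge0 => i _; apply: sumr_ge0 => j _; exact: sqr_ge0.
have E : \sum_i \sum_j (u i * v j - u j * v i) ^+ 2 =
   (\sum_i u i ^+ 2) * (\sum_j v j ^+ 2) + (\sum_i v i ^+ 2) * (\sum_j u j ^+ 2)
   - 2 * ((\sum_i u i * v i) * (\sum_j u j * v j)).
  rewrite !big_distrlr /= mulr_sumr -!big_split /= -sumrB; apply: eq_bigr => i _.
  rewrite mulr_sumr -!big_split /= -sumrB; apply: eq_bigr => j _.
  ring.
rewrite E in H; lra.
Qed.

Lemma CS_abs (I : finType) (u v : I -> R) :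
  `|\sum_i u i * v i| <= Num.sqrt (\sum_i u i ^+ 2) * Num.sqrt (\sum_i v i ^+ 2).
Proof.
rewrite -sqrtrM; last by apply: sumr_ge0 => i _; exact: sqr_ge0.
rewrite -sqrtr_sqr ler_sqrt; first exact: CS.
by apply: mulr_ge0; apply: sumr_ge0 => i _; exact: sqr_ge0.
Qed.

Lemma l1l2 (I : finType) (S : {set I}) (f : I -> R) :
  (\sum_i (if i \in S then `|f i| else 0)) ^+ 2 <=
   #|S|%:R * \sum_i (if i \in S then f i ^+ 2 else 0).
Proof.
have := @CS _ (fun i => if i \in S then 1 else 0) (fun i => if i \in S then `|f i| else 0).
have -> : \sum_i (if i \in S then 1 else 0) ^+ 2 = #|S|%:R :> R.
  rewrite (eq_bigr (fun i => if i \in S then 1 else 0)); last first.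
    by move=> i _; case: ifP => _; rewrite ?expr1n ?expr0n.
  by rewrite -big_mkcond /= sumr_const.
have E1 : \sum_i (if i \in S then 1 else 0) * (if i \in S then `|f i| else 0) =
          \sum_i (if i \in S then `|f i| else 0) :> R.
  by apply: eq_bigr => i _; case: ifP => _; rewrite ?mul1r ?mul0r.
have E2 : \sum_i (if i \in S then `|f i| else 0) ^+ 2 =
          \sum_i (if i \in S then f i ^+ 2 else 0) :> R.
  by apply: eq_bigr => i _; case: ifP => _; rewrite ?real_normK ?num_real ?expr0n.
by rewrite E1 E2.
Qed.

Definition G {m n} (A : 'M[R]_(m, n)) i j := \sum_r A r i * A r j.

Lemma gram_expand m n (A : 'M[R]_(m, n)) (p q : 'I_n -> R) :
  \sum_r (\sum_i A r i * p i) * (\sum_j A r j * q j) =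
  \sum_i \sum_j p i * q j * G A i j.
Proof.
under eq_bigr => r _ do rewrite big_distrlr /=.
rewrite exchange_big /=; apply: eq_bigr => i _.
rewrite exchange_big /=; apply: eq_bigr => j _.
rewrite /G mulr_sumr; apply: eq_bigr => r _; ring.
Qed.

Lemma gram_bound m n (A : 'M[R]_(m, n)) (mu : R) (p q : 'I_n -> R) :
  (forall i, G A i i = 1) -> (forall i j, i != j -> `|G A i j| <= mu) ->
  `|\sum_i \sum_j p i * q j * G A i j - \sum_i p i * q i| <=
   mu * ((\sum_i `|p i|) * (\sum_j `|q j|) - \sum_i `|p i| * `|q i|).
Proof.
move=> Hd Ho.
have E : \sum_i \sum_j p i * q j * G A i j - \sum_i p i * q i =
   \sum_i \sum_(j | j != i) p i * q j * G A i j.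
  rewrite -sumrB; apply: eq_bigr => i _.
  by rewrite (bigD1 i) //= Hd mulr1 addrC addrK.
have E2 : (\sum_i `|p i|) * (\sum_j `|q j|) - \sum_i `|p i| * `|q i| =
   \sum_i `|p i| * \sum_(j | j != i) `|q j|.
  rewrite mulr_suml -sumrB; apply: eq_bigr => i _.
  by rewrite (bigD1 i) //= mulrDr addrAC subrr add0r.
rewrite E E2 mulr_sumr.
apply: (le_trans (ler_norm_sum _ _ _)); apply: ler_sum => i _.
rewrite mulr_sumr mulr_sumr.
apply: (le_trans (ler_norm_sum _ _ _)); apply: ler_sum => j Hj.
rewrite !normrM [mu * _]mulrC.
apply: ler_wpM2l; first by rewrite mulr_ge0.
by apply: Ho; rewrite eq_sym.
Qed.
End Aux.
Arguments G {R m n} A i j.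
Arguments gram_expand {R m n} A p q.
Arguments gram_bound {R m n} A mu p q.
Arguments CS_abs {R I} u v.
Arguments l1l2 {R I} S f.

Theorem theorem6 (R : realType) (m n : nat) (A : 'M[R]_(m, n))
    (x : 'cV[R]_n) (y : 'cV[R]_m) (eps : R) (k : nat) (xk : 'cV[R]_n)
    (T : {set 'I_n}) (rho alpha w : R) (xstar : 'cV[R]_n) :
  (m < n)%N ->
  (forall j, norm2 (col j A) = 1) ->
  norm2 (y - A *m x) <= eps ->
  (0 < k)%N ->
  best_kterm k x xk ->
  let T0 := supp xk in
  let mu := coherence A in
  0 <= rho -> 0 <= alpha <= 1 ->
  #|T|%:R = rho * k%:R ->
  #|T :&: T0|%:R = alpha * rho * k%:R ->
  0 <= w <= 1 ->
  (* xstar minimizes the weighted l1 norm subject to ||y - A z||_2 <= eps *)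
  norm2 (y - A *m xstar) <= eps ->
  (forall z : 'cV[R]_n, norm2 (y - A *m z) <= eps ->
     norm1w T w xstar <= norm1w T w z) ->
  (* the bound on k, with denominators cleared (rho = 0 means the bound is +oo) *)
  (0 < w ->
     k%:R * rho * (2 * (2 * w * Num.sqrt alpha + 1)) ^+ 2 <
     (w + Num.sqrt (w ^+ 2 + 4 * (2 * w * Num.sqrt alpha + 1) * (1 + 1 / mu))) ^+ 2) ->
  (w = 0 -> k%:R * rho < 1 + 1 / mu) ->
  let D := 1 + mu + w * mu * Num.sqrt (rho * k%:R)
           - mu * rho * k%:R * (2 * w * Num.sqrt alpha + 1) in
  let C0 := 2 * Num.sqrt (1 + (rho * k%:R - 1) * mu) / D in
  let C1 := 2 * mu * Num.sqrt (rho * k%:R) / D in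
  norm2 (restrict T xstar - restrict T x) <=
    C0 * eps + C1 * (w * norm1 (x - xk)
                     + (1 - w) * norm1 (restrict (~: T :&: ~: T0) x)
                     + norm1 (restrict (~: T :&: T0) x)).
Proof.
Proof.
move=> Hmn Hcol Hx Hk Hbest T0 mu Hrho Halpha HT HTT0 Hw Hxs Hopt Hkw Hk0.
cbv zeta.
have Hd : forall i, G A i i = 1.
  move=> i; have := Hcol i; rewrite /norm2 => H.
  have Hs : 0 <= \sum_r (col i A r 0) ^+ 2 by apply: sumr_ge0 => r _; exact: sqr_ge0.
  rewrite /G -[RHS](expr1n _ 2%N) -H sqr_sqrtr //.
  by apply: eq_bigr => r _; rewrite !mxE expr2.
have Ho : forall i j, i != j -> `|G A i j| <= mu.
  move=> i j Hij.
  have E : `|((col i A)^T *m col j A) 0 0| / (norm2 (col i A) * norm2 (col j A)) = `|G A i j|.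
    rewrite !Hcol mulr1 divr1 !mxE; congr `|_|; apply: eq_bigr => r _; by rewrite !mxE.
  rewrite -E /mu /coherence.
  apply: le_trans (le_bigmax _ _ i).
  exact: (@le_bigmax_cond _ _ _ 0 j (fun j0 => i != j0) _ Hij).
have Hmu0 : 0 <= mu by rewrite /mu /coherence; exact: bigmax_ge_id.
move: Halpha Hw => /andP[Ha0 Ha1] /andP[Hw0 Hw1].
have Heps : 0 <= eps by apply: le_trans Hx; exact: sqrtr_ge0.
set h := fun i => xstar i 0 - x i 0.
set hT := fun i => if i \in T then h i else 0.
set a2 := \sum_i (if i \in T then h i ^+ 2 else 0).
set b := \sum_i (if i \in T then `|h i| else 0).
set b0 := \sum_i (if i \in T :&: T0 then `|h i| else 0).
set a02 := \sum_i (if i \in T :&: T0 then h i ^+ 2 else 0).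
set Lp := \sum_i (if i \in T then 0 else `|h i|).
set E := (w * norm1 (x - xk) + (1 - w) * norm1 (restrict (~: T :&: ~: T0) x)
          + norm1 (restrict (~: T :&: T0) x)).
set u := fun r => \sum_i A r i * hT i.
set P := \sum_r u r * (\sum_j A r j * h j).
set N := \sum_r u r ^+ 2.
have HL : norm2 (restrict T xstar - restrict T x) = Num.sqrt a2.
  rewrite /norm2; congr Num.sqrt; apply: eq_bigr => i _; rewrite !mxE.
  by case: ifP => _; rewrite ?subr0 ?expr0n.
rewrite HL.
have Ha2 : 0 <= a2 by apply: sumr_ge0 => i _; case: ifP => _ //; exact: sqr_ge0.
have Hb : 0 <= b by apply: sumr_ge0 => i _; case: ifP => _ //.
have Hb0 : 0 <= b0 by apply: sumr_ge0 => i _; case: ifP => _ //.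
have HLp : 0 <= Lp by apply: sumr_ge0 => i _; case: ifP => _ //.
have HE0 : 0 <= E.
  rewrite /E /norm1; apply: addr_ge0; first apply: addr_ge0.
  - by apply: mulr_ge0 => //; apply: sumr_ge0.
  - by apply: mulr_ge0; [rewrite subr_ge0 | apply: sumr_ge0].
  - by apply: sumr_ge0.
have HB1 : b ^+ 2 <= #|T|%:R * a2 by exact: l1l2.
have HB0 : b0 ^+ 2 <= #|T :&: T0|%:R * a2.
  apply: (le_trans (l1l2 _ _)); apply: ler_wpM2l => //.
  apply: ler_sum => i _; rewrite inE; case: (i \in T) => //=.
  by case: (i \in T0) => //=; exact: sqr_ge0.
have Hsa : \sum_i hT i * h i = a2.
  by apply: eq_bigr => i _; rewrite /hT; case: ifP => _; rewrite ?mul0r ?expr2.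
have Hsa' : \sum_i `|hT i| * `|h i| = a2.
  apply: eq_bigr => i _; rewrite /hT; case: ifP => _; rewrite ?normr0 ?mul0r //.
  by rewrite -normrM -expr2 ger0_norm // sqr_ge0.
have Hsa'' : \sum_i `|hT i| * `|hT i| = a2.
  apply: eq_bigr => i _; rewrite /hT; case: ifP => _; rewrite ?normr0 ?mul0r //.
  by rewrite -normrM -expr2 ger0_norm // sqr_ge0.
have HsT : \sum_i `|hT i| = b.
  by apply: eq_bigr => i _; rewrite /hT; case: ifP => _; rewrite ?normr0.
have Hsh : \sum_i `|h i| = b + Lp.
  rewrite -big_split; apply: eq_bigr => i _ /=.
  by case: ifP => _; rewrite ?addr0 ?add0r.
have HPlo : a2 - mu * (b * (b + Lp) - a2) <= P.
  have := gram_bound A mu hT h Hd Ho.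
  rewrite -gram_expand Hsa Hsa' HsT Hsh -/P ler_norml => /andP[H1 H2].
  lra.
have HN : N <= a2 + mu * (b * b - a2).
  have := gram_bound A mu hT hT Hd Ho.
  rewrite -gram_expand Hsa'' HsT.
  have -> : \sum_i hT i * hT i = a2.
    by apply: eq_bigr => i _; rewrite /hT; case: ifP => _; rewrite ?mul0r ?expr2.
  have -> : \sum_r (\sum_i A r i * hT i) * (\sum_j A r j * hT j) = N.
    by apply: eq_bigr => r _; rewrite expr2.
  rewrite ler_norml => /andP[H1 H2]; lra.
have HPup : P <= 2 * eps * Num.sqrt N.
  have Hres : forall r, \sum_j A r j * h j =
      (y - A *m x) r 0 - (y - A *m xstar) r 0.
    move=> r; rewrite !mxE.
    under eq_bigr => j _ do rewrite /h mulrBr.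
    rewrite sumrB; ring.
  have -> : P = \sum_r u r * (y - A *m x) r 0 - \sum_r u r * (y - A *m xstar) r 0.
    rewrite -sumrB; apply: eq_bigr => r _; by rewrite Hres mulrBr.
  have H1 := CS_abs u (fun r => (y - A *m x) r 0).
  have H2 := CS_abs u (fun r => (y - A *m xstar) r 0).
  rewrite -/N in H1 H2.
  have HsN : 0 <= Num.sqrt N by exact: sqrtr_ge0.
  have H1' : Num.sqrt N * norm2 (y - A *m x) <= Num.sqrt N * eps by exact: ler_wpM2l.
  have H2' : Num.sqrt N * norm2 (y - A *m xstar) <= Num.sqrt N * eps by exact: ler_wpM2l.
  rewrite /norm2 in H1' H2'.
  move: H1 H2; rewrite !ler_norml => /andP[H11 H12] /andP[H21 H22].
  lra.
have HC : (-2 * w) * b0 + w * b + Lp - 2 * E <= 0.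
  { case: Hbest => S [_ _ HxkS].
  have Hop := Hopt x Hx.
  set Ee := fun i => w * `|(x - xk) i 0| + (1 - w) * `|restrict (~: T :&: ~: T0) x i 0|
                     + `|restrict (~: T :&: T0) x i 0|.
  have HEs : E = \sum_i Ee i by rewrite /E /norm1 !mulr_sumr -!big_split.
  rewrite HEs /b0 /b /Lp !mulr_sumr -!big_split -sumrB /=.
  apply: (le_trans _ (_ : norm1w T w xstar - norm1w T w x <= 0)); last by rewrite subr_le0.
  rewrite /norm1w -sumrB; apply: ler_sum => i _.
  rewrite /Ee /h /T0 /supp HxkS !inE !mxE !inE.
  have Ht1 := ler_normD (xstar i 0 - x i 0) (x i 0).
  have Ht2 := ler_normD (xstar i 0) (- x i 0).
  have Ht3 := ler_normD (x i 0 - xstar i 0) (xstar i 0).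
  rewrite subrK normrN in Ht1 Ht2.
  rewrite subrK distrC in Ht3.
  have HX := normr_ge0 (x i 0).
  have HY := normr_ge0 (xstar i 0).
  have HH := normr_ge0 (xstar i 0 - x i 0).
  case HiT: (i \in T) => /=; case HiS: (i \in S) => /=; try case: eqP => Hx0 /=;
    rewrite ?Hx0 ?subrr ?subr0 ?normr0 ?mulr0 ?mul0r ?addr0 ?add0r ?mulr1 ?mul1r //=.
  all: try (rewrite mxE HiS /= in Hx0; rewrite Hx0 normr0 in HX Ht1 Ht2 Ht3 * ).
  all: clear -Ht1 Ht2 Ht3 HX HY HH Hw0 Hw1; nra. }
have HaT0 : #|T| = 0%N -> a2 = 0.
  move=> HT0; rewrite /a2; apply: big1 => i _.
  by move/eqP: HT0; rewrite cards_eq0 => /eqP ->; rewrite inE.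
clearbody h hT a2 b b0 a02 Lp E u P N mu T0.
set t := rho * k%:R.
set sq := Num.sqrt t.
set Z := Num.sqrt (1 + (t - 1) * mu).
set sa := Num.sqrt alpha.
set a := Num.sqrt a2.
have Ht0 : 0 <= t by rewrite /t mulr_ge0.
have HtT : t = #|T|%:R by rewrite /t HT.
have HtTT0 : alpha * t = #|T :&: T0|%:R by rewrite HTT0 /t mulrA.
have Hsq : sq * sq = t by rewrite -expr2 sqr_sqrtr.
have Hsq0 : 0 <= sq by exact: sqrtr_ge0.
have Hsaa : sa * sa = alpha by rewrite -expr2 sqr_sqrtr.
have Hsa0 : 0 <= sa by exact: sqrtr_ge0.
have Haa : a * a = a2 by rewrite -expr2 sqr_sqrtr.
have Hapos : 0 <= a by exact: sqrtr_ge0.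
have HZ0 : 0 <= Z by exact: sqrtr_ge0.
set c := 2 * w * sa + 1.
have Hc1 : 1 <= c by rewrite /c lerDr; apply: mulr_ge0 => //; apply: mulr_ge0.
have Hcdef : c = 2 * w * sa + 1 by [].
set D := 1 + mu + w * mu * sq - mu * rho * k%:R * c.
have HDt : D = 1 + mu + w * mu * sq - mu * t * c by rewrite /D /t !mulrA.
clearbody D.
have HD : 0 < D.
  rewrite HDt.
  have [Hm0|Hmpos] := eqVneq mu 0.
    by rewrite Hm0 !mulr0 !mul0r addr0 subr0 addr0.
  have Hmu : 0 < mu by rewrite lt0r Hmpos Hmu0.
  have HmK : mu * (1 + 1 / mu) = mu + 1.
    by rewrite mulrDr mulr1 mul1r mulfV.
  have HK0 : 0 < 1 + 1 / mu by rewrite ltr_wpDr // divr_ge0 // ltW.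
  have [Hw00|Hwpos] := eqVneq w 0.
    have H := Hk0 Hw00.
    have Hc : c = 1 by rewrite Hcdef Hw00 mulr0 mul0r add0r.
    have H' : mu * t < mu * (1 + 1 / mu).
      by rewrite ltr_pM2l // /t mulrC.
    rewrite Hc Hw00 HmK in H' *.
    clear -H'; lra.
  have Hw' : 0 < w by rewrite lt0r Hwpos Hw0.
  have H := Hkw Hw'.
  rewrite -/sa -Hcdef in H.
  set K := 1 + 1 / mu in H HmK HK0.
  set Q := Num.sqrt (w ^+ 2 + 4 * c * K) in H.
  have HQ0 : 0 <= Q by exact: sqrtr_ge0.
  have HQ : Q * Q = w ^+ 2 + 4 * c * K.
    rewrite -expr2 sqr_sqrtr //; apply: addr_ge0; first exact: sqr_ge0.
    by apply: mulr_ge0; [apply: mulr_ge0; [|lra] | exact: ltW].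
  have H2 : 2 * c * sq < w + Q.
    have E3 : k%:R * rho * (2 * c) ^+ 2 = (2 * c * sq) ^+ 2.
      by rewrite [RHS]exprMn (expr2 sq) Hsq HtT HT; ring.
    rewrite E3 in H.
    move: H; rewrite ltr_pXn2r // nnegrE; last lra.
    by apply: mulr_ge0 => //; lra.
  have H3 : c * t - w * sq < K.
    have [Hge|Hlt] := lerP 0 (2 * c * sq - w).
      have H4 : (2 * c * sq - w) * (2 * c * sq - w) < Q * Q.
        by apply: ltr_pM => //; lra.
      rewrite HQ in H4.
      have H5 : 0 < 4 * c by lra.
      have H6 : 4 * c * (c * (sq * sq) - w * sq) < 4 * c * K.
        by rewrite -(ltrD2r (w ^+ 2)); move: H4; rewrite expr2; lra.
      by rewrite -Hsq; move: H6; rewrite ltr_pM2l.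
    have H7 : sq * (c * sq - w) <= 0.
      by apply: mulr_ge0_le0 => //; lra.
    rewrite -Hsq; lra.
  have E4 : 1 + mu + w * mu * sq - mu * t * c = mu * (K - (c * t - w * sq)).
    by rewrite mulrBr HmK; ring.
  by rewrite E4; apply: mulr_gt0 => //; rewrite subr_gt0.
have -> : 2 * Z / D * eps + 2 * mu * sq / D * E = (2 * Z * eps + 2 * mu * sq * E) / D.
  by rewrite [RHS]mulrDl; congr (_ + _); rewrite mulrAC.
rewrite ler_pdivlMr //.
have HZdef : Z = Num.sqrt (1 + (t - 1) * mu) by [].
have Hadef : a = Num.sqrt a2 by [].
clearbody t sq Z sa a c.
have [HT0|HT1] := eqVneq #|T| 0%N.
  have Ha20 : a = 0.
    by have := HaT0 HT0; rewrite -Haa => /eqP; rewrite mulf_eq0 orbb => /eqP.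
  rewrite Ha20 mul0r.
  by apply: addr_ge0; apply: mulr_ge0 => //; apply: mulr_ge0 => //; apply: mulr_ge0.
have Ht1 : 1 <= t.
  by rewrite HtT ler1n lt0n.
have Hsq1 : 1 <= sq by nra.
have Hbs : b <= sq * a.
  have H : b ^+ 2 <= (sq * a) ^+ 2.
    by rewrite exprMn !expr2 Hsq Haa HtT.
  by rewrite -(ler_pXn2r (n := 2%N)) // ?nnegrE ?mulr_ge0.
have Hb0s : b0 <= sa * sq * a.
  have H : b0 ^+ 2 <= (sa * sq * a) ^+ 2.
    rewrite !exprMn !expr2 Hsq Haa Hsaa.
    rewrite HtTT0.
    exact: HB0.
  by rewrite -(ler_pXn2r (n := 2%N)) // ?nnegrE ?mulr_ge0.
have HsN : Num.sqrt N <= Z * a.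
  have Hpos : 0 <= 1 + (t - 1) * mu.
    by apply: addr_ge0 => //; apply: mulr_ge0 => //; rewrite subr_ge0.
  rewrite HZdef Hadef -sqrtrM //.
  rewrite ler_sqrt; last by apply: mulr_ge0.
  have Hbb : b * b <= t * a2 by rewrite -Haa -Hsq -mulrACA; exact: ler_pM.
  have := ler_wpM2l Hmu0 Hbb.
  clear -HN; nra.
have HLp' : Lp <= 2 * w * b0 - w * b + 2 * E by lra.
have M1 : b * (b + Lp) <= (1 - w) * (sq * a) ^+ 2 + 2 * w * (sq * a) * (sa * sq * a)
                          + 2 * (sq * a) * E.
  have S1 : b * (b + Lp) <= b * (b + (2 * w * b0 - w * b + 2 * E)).
    by apply: ler_wpM2l => //; lra.
  apply: (le_trans S1).
  have S2 : (1 - w) * (b * b) <= (1 - w) * ((sq * a) * (sq * a)).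
    apply: ler_wpM2l; first lra.
    by apply: ler_pM.
  have S3 : w * (b * b0) <= w * ((sq * a) * (sa * sq * a)).
    by apply: ler_wpM2l => //; apply: ler_pM.
  have S4 : b * E <= (sq * a) * E by apply: ler_wpM2r.
  rewrite expr2; clear -S2 S3 S4; nra.
have M2 : a2 - mu * (b * (b + Lp) - a2) <= 2 * eps * (Z * a).
  apply: (le_trans HPlo); apply: (le_trans HPup).
  by apply: ler_wpM2l => //; apply: mulr_ge0.
have M3 : a * (a * (1 + mu - mu * ((1 - w) * t + 2 * w * sa * t)))
          <= a * (2 * eps * Z + 2 * mu * sq * E).
  have M1' := ler_wpM2l Hmu0 M1.
  rewrite -Haa in M2.
  have E1 : (sq * a) ^+ 2 = t * (a * a) by rewrite exprMn expr2 Hsq expr2.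
  have E2 : 2 * w * (sq * a) * (sa * sq * a) = 2 * w * sa * t * (a * a) by rewrite -Hsq; ring.
  rewrite E1 E2 in M1'.
  clear -M1' M2; nra.
have [Ha0'|Hapos'] := eqVneq a 0.
  rewrite Ha0' mul0r; have := mulr_ge0 HZ0 Heps; have := mulr_ge0 (mulr_ge0 Hmu0 Hsq0) HE0.
  lra.
have Hap : 0 < a by rewrite lt0r Hapos' Hapos.
have M4 : a * (1 + mu - mu * ((1 - w) * t + 2 * w * sa * t)) <= 2 * eps * Z + 2 * mu * sq * E.
  by rewrite -(ler_pM2l Hap).
have HDD : D <= 1 + mu - mu * ((1 - w) * t + 2 * w * sa * t).
  rewrite HDt Hcdef -Hsq.
  have : 0 <= w * mu * sq * (sq - 1) by apply: mulr_ge0; [apply: mulr_ge0; [apply: mulr_ge0|] | rewrite subr_ge0].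
  clear -Hsq; nra.
apply: (le_trans (ler_wpM2l Hapos HDD)); apply: (le_trans M4); by rewrite mulrAC.
Qed.
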